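(* Let $f\in F$ be strongly positive. Then $f$ can be expressed uniquely in the form $f=x_{i_n}\cdots x_{i_2}x_{i_1}$ with $n\ge0$, all $i_k\ge1$, and $i_{k+1}\ge i_k-1$ for all $k=1,\dots,n-1$.
   Context: Thompson's group $F=\langle x_0,x_1,x_2,\dots\mid x_nx_k=x_kx_{n+1}\text{ for }k<n\rangle$. An element of $F$ is strongly positive if it lies in the submonoid generated by $x_1,x_2,x_3,\dots$. Uniqueness means uniqueness of the sequence $(i_n,\dots,i_1)$. *)

(* Defs.v *)
From mathcomp Require Import all_boot.
Set Implicit Arguments. Unset Strict Implicit. Unset Printing Implicit Defensive.

(* Thompson's group F = < x_0, x_1, ... | x_n x_k = x_k x_{n+1} (k < n) >,
   modelled as words in the free group modulo the congruence generated by
   free cancellation and the defining relations.  A letter (i, false) is x_i,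
   (i, true) is x_i^{-1}.  A word [:: a1; ...; am] denotes the product
   a1 * a2 * ... * am (left to right). *)
Definition letter := (nat * bool)%type.
Definition word := seq letter.

Inductive Frel : word -> word -> Prop :=
| Frel_cancel (i : nat) (b : bool) : Frel [:: (i, b); (i, ~~ b)] [::]
| Frel_thompson (n k : nat) : k < n ->
    Frel [:: (n, false); (k, false)] [:: (k, false); (n.+1, false)].

Inductive Feq : word -> word -> Prop :=
| Feq_step (u v w1 w2 : word) : Frel w1 w2 -> Feq (u ++ w1 ++ v) (u ++ w2 ++ v)
| Feq_refl (w : word) : Feq w w
| Feq_sym (w1 w2 : word) : Feq w1 w2 -> Feq w2 w1
| Feq_trans (w1 w2 w3 : word) : Feq w1 w2 -> Feq w2 w3 -> Feq w1 w3.

Definition pos_word (s : seq nat) : word := [seq (i, false) | i <- s].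

Definition strongly_positive (f : word) : Prop :=
  exists w : seq nat, all (fun i => 0 < i) w /\ Feq f (pos_word w).

(* the sequence [:: i_n; ...; i_2; i_1] (for f = x_{i_n} ... x_{i_1}) satisfies
   i_{k+1} >= i_k - 1 for all consecutive entries *)
Definition normal_seq (s : seq nat) : bool :=
  all (fun i => 0 < i) s && sorted (fun a b => b.-1 <= a) s.

(* Main.v *)
Require Import Defs.
From mathcomp Require Import all_boot.
From mathcomp Require Import zify.

Definition x0 (p : seq bool) : seq bool :=
  match p with
  | [::] => [::]
  | [:: false] => [:: true]
  | false :: false :: b => false :: b
  | false :: true :: b => true :: false :: b
  | true :: b => true :: true :: b
  end.

Definition y0 (p : seq bool) : seq bool :=
  match p with
  | [::] => [::]
  | [:: true] => [:: false]
  | false :: b => false :: false :: b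
  | true :: false :: b => false :: true :: b
  | true :: true :: b => true :: b
  end.

Fixpoint xf (n : nat) (p : seq bool) : seq bool :=
  match n with
  | 0 => x0 p
  | n'.+1 => match p with true :: q => true :: xf n' q | _ => p end
  end.

Fixpoint yf (n : nat) (p : seq bool) : seq bool :=
  match n with
  | 0 => y0 p
  | n'.+1 => match p with true :: q => true :: yf n' q | _ => p end
  end.

Fixpoint act (w : word) (p : seq bool) : seq bool :=
  match w with
  | [::] => p
  | (i, b) :: w' => act w' (if b then yf i p else xf i p)
  end.

Lemma act_cat u v p : act (u ++ v) p = act v (act u p).
Proof. by elim: u p => [|[i b] u IH] p //=. Qed.

Lemma xyK i p : yf i (xf i p) = p.
Proof.
elim: i p => [|i IH] [|[|] q] //=; first by case: q => [|[|] r].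
  by rewrite IH.
Qed.

Lemma yxK i p : xf i (yf i p) = p.
Proof.
elim: i p => [|i IH] [|[|] q] //=; first by case: q => [|[|] r].
  by rewrite IH.
Qed.

Lemma xf_thompson k n p : k < n -> xf k (xf n p) = xf n.+1 (xf k p).
Proof.
elim: k n p => [|k IH] [|n] p //= H.
  case: p => [|[|] q] //=.
  by case: q => [|[|] r].
case: p => [|[|] q] //=.
by rewrite IH.
Qed.

Lemma Frel_act w1 w2 : Frel w1 w2 -> forall p, act w1 p = act w2 p.
Proof.
case=> [i b|n k H] p /=.
  by case: b; rewrite ?xyK ?yxK.
by rewrite xf_thompson.
Qed.

Lemma Feq_act w1 w2 : Feq w1 w2 -> forall p, act w1 p = act w2 p.
Proof.
elim=> [u v a b H|w|a b _ IH|a b c _ IH1 _ IH2] p.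
- by rewrite !act_cat (Frel_act _ _ H).
- by [].
- by rewrite IH.
- by rewrite IH1 IH2.
Qed.

Lemma size_xf i p : size (xf i p) <= (size p).+1.
Proof.
elim: i p => [|i IH] [|[|] q] //=; try by case: q => [|[|] r] /=; lia.
exact: IH.
Qed.

Lemma size_act s p : size (act (pos_word s) p) <= size p + size s.
Proof.
elim: s p => [|i s IH] p /=; first by rewrite addn0.
apply: leq_trans (IH _) _; have := size_xf i p; lia.
Qed.

Lemma xf_ones i j b : i < j ->
  xf i (nseq j true ++ false :: b) = nseq j.+1 true ++ false :: b.
Proof.
elim: i j => [|i IH] [|j] //= H.
by rewrite IH.
Qed.

Lemma xf_fail i : xf i (nseq i true ++ [:: false; false]) = nseq i true ++ [:: false].
Proof. by elim: i => [|i IH] //=; rewrite IH. Qed.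

Definition R (a b : nat) : bool := b.-1 <= a.

Lemma SH s : sorted R s -> forall j b, (if s is i :: _ then i < j else true) ->
  act (pos_word s) (nseq j true ++ false :: b) = nseq (j + size s) true ++ false :: b.
Proof.
elim: s => [|i s IH] /=; first by move=> _ j b _; rewrite addn0.
move=> Hp j b Hij.
rewrite xf_ones // IH.
- by rewrite addSnnS.
- by apply: (path_sorted Hp).
case: s Hp {IH} => [|i' s] //= /andP [H _].
move: H; rewrite /R; lia.
Qed.

Lemma head_le s : (if s is i :: _ then i else 0) <= sumn s.
Proof. case: s => //= i s; lia. Qed.

Lemma uniq_normal s t : sorted R s -> sorted R t ->
  (forall p, act (pos_word s) p = act (pos_word t) p) -> s = t.
Proof.
elim: s t => [|i s IH] t Hs Ht Heq.
- have := Heq (nseq (sumn t).+1 true ++ [:: false]).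
  rewrite (SH _ Ht); last by case: t {Heq Ht} => //= k t; lia.
  move=> /(congr1 size); rewrite !size_cat !size_nseq /=.
  case: t {Ht Heq} => //= k t; lia.
- have Hsz : size (i :: s) = size t.
    have := Heq (nseq (sumn (i :: s) + sumn t).+1 true ++ [:: false]).
    rewrite (SH _ Hs); last by simpl; lia.
    rewrite (SH _ Ht); last by case: t {Heq Ht} => //= k t; lia.
    move=> /(congr1 size); rewrite !size_cat !size_nseq /=; lia.
  case: t Ht Heq Hsz => [|k t] // Ht Heq /= [Hsz].
  have Hs' : sorted R s := path_sorted Hs.
  have Ht' : sorted R t := path_sorted Ht.
  case: (ltngtP i k) => Hik.
  + have := Heq (nseq k true ++ [:: false; false]).
    rewrite (SH _ Hs) //= xf_fail => E.
    have := size_act t (nseq k true ++ [:: false]).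
    rewrite -E !size_cat !size_nseq /=; lia.
  + have := Heq (nseq i true ++ [:: false; false]).
    rewrite (SH _ Ht) //= xf_fail => E.
    have := size_act s (nseq i true ++ [:: false]).
    rewrite E !size_cat !size_nseq /=; lia.
  + subst k; congr (_ :: _); apply: IH => // q.
    by have := Heq (yf i q); rewrite /= yxK.
Qed.

Lemma unsorted_split w : ~~ sorted R w ->
  exists u a b v, w = u ++ a :: b :: v /\ ~~ R a b.
Proof.
elim: w => [|x w IH] //=.
case: w IH => [|y w] //= IH.
case Hxy: (R x y) => /= H.
- have [u [a [b [v [E Hab]]]]] := IH H.
  by exists (x :: u), a, b, v; rewrite E.
- by exists [::], x, y, w; rewrite Hxy.
Qed.

Lemma exists_normal n w : sumn w < n -> all (fun i => 0 < i) w ->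
  exists s, normal_seq s /\ Feq (pos_word w) (pos_word s).
Proof.
elim: n w => [|n IH] w //= Hn Hpos.
case Hsort: (sorted R w).
  exists w; split; last exact: Feq_refl.
  by rewrite /normal_seq Hpos.
have [u [a [b [v [E Hab]]]]] := unsorted_split _ (negbT Hsort).
move: Hab; rewrite /R -ltnNge => Hab.
have [c Ec] : exists c, b = c.+1 by exists b.-1; lia.
subst w; subst b; move: Hab => /= Hac.
have Hac' : a < c by lia.
have Hlt : sumn (u ++ c :: a :: v) < n by rewrite !sumn_cat /= in Hn *; lia.
have Hp2 : all (fun i => 0 < i) (u ++ c :: a :: v).
  move: Hpos; rewrite !all_cat /= => /andP [H1 H2].
  case/andP: H2 => Ha H4.
  by rewrite H1 Ha H4 /= !andbT; lia.
have [s [Hs Hf]] := IH _ Hlt Hp2.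
exists s; split => //.
apply: Feq_trans Hf.
have := Feq_step (pos_word u) (pos_word v) (Frel_thompson Hac').
rewrite /pos_word !map_cat /= => H.
exact: Feq_sym H.
Qed.

Theorem theorem4p1p7 (f : word) :
  strongly_positive f ->
  exists! s : seq nat, normal_seq s /\ Feq f (pos_word s).
Proof.
move=> [w [Hpos Hf]].
have [s [Hs Hws]] := exists_normal _ _ (ltnSn (sumn w)) Hpos.
exists s; split; first by split => //; exact: Feq_trans Hf Hws.
move=> t [Ht Hft].
have Hst : Feq (pos_word s) (pos_word t) :=
  Feq_trans (Feq_sym (Feq_trans Hf Hws)) Hft.
apply: uniq_normal.
- by move: Hs => /andP [].
- by move: Ht => /andP [].
- exact: Feq_act Hst.
Qed.
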